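(* Let $U=\{u_1,\dots,u_{2^m}\}\subseteq\mathbb{F}_2^n\setminus\{0\}$ be a set of $2^m$ distinct nonzero vectors, and let $B:\mathbb{F}_2^n\to\mathbb{F}_2^m$ be a uniformly random linear map. Fix $y\in\mathbb{F}_2^m$ and define $Z_y:=|\{i: Bu_i=y\}|$. Then for every integer $r\ge 0$, with $a=\lceil\log(r+2)\rceil$, \[ \Pr[Z_y>r]\le\left(\prod_{j=0}^{a-1}(r+2-2^j)\right)^{-1}. \]
   Context: $\log$ denotes the base-$2$ logarithm. A uniformly random linear map $\mathbb{F}_2^n\to\mathbb{F}_2^m$ is one chosen uniformly among all linear maps. *)

(* Defs.v *)
From mathcomp Require Import all_boot all_order all_algebra.
Set Implicit Arguments. Unset Strict Implicit. Unset Printing Implicit Defensive.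
Import GRing.Theory Num.Theory.

(* Vectors of F_2^n are column vectors 'cV['F_2]_n; a linear map
   F_2^n -> F_2^m is (uniquely) a matrix B : 'M['F_2]_(m, n) acting by B *m u.
   A uniformly random linear map = uniform distribution on the finite type
   'M['F_2]_(m, n). *)

(* Z_y(B) = #{ u in U | B u = y } (U is a set, its elements are the distinct u_i). *)
Definition Zy (m n : nat) (U : {set 'cV['F_2]_n}) (y : 'cV['F_2]_m)
  (B : 'M['F_2]_(m, n)) : nat := #|[set u in U | (B *m u)%R == y]|.

Definition prob_Zy_gt (m n : nat) (U : {set 'cV['F_2]_n}) (y : 'cV['F_2]_m)
  (r : nat) : rat :=
  (#|[set B : 'M['F_2]_(m, n) | (r < Zy U y B)%N]|%:R / #|{: 'M['F_2]_(m, n)}|%:R)%R.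

Definition ceil_log2 (k : nat) : nat := up_log 2 k.

(* Main.v *)
Require Import Defs.
From mathcomp Require Import all_boot all_order all_algebra.
From mathcomp Require Import zify.
Set Implicit Arguments. Unset Strict Implicit. Unset Printing Implicit Defensive.
Import GRing.Theory Num.Theory.
Local Open Scope ring_scope.

Lemma card_F2 : #|'F_2| = 2%N.
Proof. by rewrite card_Fp. Qed.

Lemma card_rV2 j : #|{: 'rV['F_2]_j}| = (2 ^ j)%N.
Proof. by rewrite card_mx card_F2 mul1n. Qed.

Lemma span_count n j (A : 'M['F_2]_(j,n)) (S : {set 'cV['F_2]_n}) :
  0 \notin S -> (#|[set v in S | (v^T <= A)%MS]| <= 2 ^ j - 1)%N.
Proof.
move=> S0.
have sub : [set v in S | (v^T <= A)%MS] \subset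
   (fun x : 'rV_j => (x *m A)^T) @: [set~ 0].
  apply/subsetP => v; rewrite inE => /andP[vS /submxP[x ex]].
  apply/imsetP; exists x; last by rewrite -ex trmxK.
  rewrite !inE; apply: contraNneq S0 => x0.
  by rewrite -[v]trmxK ex x0 mul0mx trmx0 in vS.
apply: leq_trans (subset_leq_card sub) _.
apply: leq_trans (leq_imset_card _ _) _.
by rewrite cardsC1 card_rV2 subn1.
Qed.
Lemma row_free_col (F : fieldType) n j (v : 'rV[F]_n) (A : 'M_(j,n)) :
  row_free A -> ~~ (v <= A)%MS -> row_free (col_mx v A).
Proof.
move=> fA vA; apply: inj_row_free => x.
rewrite -[x]hsubmxK mul_row_col.
set x0 := lsubmx x; set x1 := rsubmx x => e.
have [x00|nx0] := eqVneq x0 0.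
  move: e; rewrite x00 mul0mx add0r => e.
  have : x1 *m A = 0 *m A by rewrite mul0mx.
  by move/(row_free_inj fA) => ->; rewrite row_mx0.
exfalso; apply: (negP vA).
have hc : x0 0 0 != 0.
  by apply: contraNneq nx0 => c0; apply/eqP/matrixP => i k; rewrite !ord1 c0 mxE.
have ev : v = ((- (x0 0 0)^-1) *: x1) *m A.
  rewrite -scalemxAl scaleNr -scalerN.
  have : x0 *m v = - (x1 *m A) by apply/eqP; rewrite -addr_eq0 e.
  rewrite [x0]mx11_scalar mul_scalar_mx => <-.
  by rewrite scalerA mxE eqxx mulr1n mulVf ?scale1r.
by rewrite ev submxMl.
Qed.

Definition goodS n (S : {set 'cV['F_2]_n}) j : {set 'M['F_2]_(j,n)} :=
  [set A | row_free A && [forall i, (row i A)^T \in S]].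

Lemma goodS_lb n (S : {set 'cV['F_2]_n}) j : 0 \notin S ->
  (\prod_(i < j) (#|S| + 1 - 2 ^ i) <= #|goodS S j|)%N.
Proof.
move=> S0; elim: j => [|j IH].
  rewrite big_ord0 card_gt0; apply/set0Pn; exists 0; rewrite inE.
  by apply/andP; split; [rewrite /row_free mxrank0 | apply/forallP => -[]].
rewrite big_ord_recr /=.
set c := (#|S| + 1 - 2 ^ j)%N.
pose P := [set p : 'M['F_2]_(j,n) * 'cV['F_2]_n |
            (p.1 \in goodS S j) && ((p.2 \in S) && ~~ (p.2^T <= p.1)%MS)].
pose f := fun p : 'M['F_2]_(j,n) * 'cV['F_2]_n => col_mx p.2^T p.1 : 'M['F_2]_(1 + j, n).
have finj : {in P &, injective f}.
  move=> [A v] [A' v'] _ _ /eq_col_mx /= [/trmx_inj -> ->] //.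
have fsub : f @: P \subset goodS S (1 + j).
  apply/subsetP => _ /imsetP[[A v] + ->].
  rewrite !inE /= => /andP[/andP[fA rA] /andP[vS vA]].
  apply/andP; split; first exact: row_free_col.
  apply/forallP => i; rewrite -(splitK i); case: (split i) => k /=.
    by rewrite rowKu row_id trmxK.
  by rewrite rowKd; exact: (forallP rA).
have cardP : #|P| = (\sum_(A in goodS S j) #|S :\: [set v | (v^T <= A)%MS]|)%N.
  rewrite -sum1_card.
  rewrite (eq_bigl (fun p => (p.1 \in goodS S j) && ((p.2 \in S) && ~~ (p.2^T <= p.1)%MS))); last first.
    by move=> p; rewrite inE.
  rewrite -(pair_big_dep (fun A => A \in goodS S j)
               (fun A v => (v \in S) && ~~ (v^T <= A)%MS) (fun _ _ => 1%N)) /=.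
  apply: eq_bigr => A _; rewrite -sum1_card; apply: eq_bigl => v.
  by rewrite !inE andbC.
have inner : forall A : 'M['F_2]_(j,n), (c <= #|S :\: [set v | (v^T <= A)%MS]|)%N.
  move=> A; have := span_count A S0.
  have -> : [set v in S | (v^T <= A)%MS] = S :&: [set v | (v^T <= A)%MS].
    by apply/setP => v; rewrite !inE.
  rewrite /c -(cardsID [set v | (v^T <= A)%MS] S).
  have : (0 < 2 ^ j)%N by rewrite expn_gt0.
  move: (#|S :&: _|) (#|S :\: _|) (2 ^ j)%N => x y z; lia.
apply: leq_trans (subset_leq_card fsub).
rewrite (card_in_imset finj) cardP.
apply: leq_trans (leq_mul IH (leqnn c)) _.
rewrite -sum_nat_const; exact: leq_sum.
Qed.

Lemma fiber_eq m n a (A : 'M['F_2]_(a,n)) (Y : 'M['F_2]_(m,a)) : row_free A ->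
  #|[set B : 'M['F_2]_(m,n) | B *m A^T == Y]| = #|[set B : 'M['F_2]_(m,n) | B *m A^T == 0]|.
Proof.
case/row_freeP => C AC.
pose B0 := Y *m C^T.
have B0A : B0 *m A^T = Y by rewrite /B0 -mulmxA -trmx_mul AC trmx1 mulmx1.
have -> : [set B : 'M['F_2]_(m,n) | B *m A^T == Y] =
          (fun B => B + B0) @: [set B : 'M['F_2]_(m,n) | B *m A^T == 0].
  apply/setP => B; rewrite inE; apply/idP/imsetP.
    move/eqP => e; exists (B - B0); last by rewrite subrK.
    by rewrite inE mulmxBl e B0A subrr.
  by case=> B' + ->; rewrite inE mulmxDl B0A => /eqP ->; rewrite add0r.
by apply: card_imset; exact: addIr.
Qed.

Lemma fiber_sum m n a (A : 'M['F_2]_(a,n)) :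
  (\sum_(Y : 'M['F_2]_(m,a)) #|[set B : 'M['F_2]_(m,n) | B *m A^T == Y]|)%N
   = #|{: 'M['F_2]_(m,n)}|.
Proof.
rewrite -sum1_card (partition_big (fun B : 'M['F_2]_(m,n) => B *m A^T) predT) //.
apply: eq_bigr => Y _; rewrite -sum1_card; apply: eq_bigl => B.
by rewrite inE.
Qed.

Lemma fiber_card m n a (A : 'M['F_2]_(a,n)) (Y : 'M['F_2]_(m,a)) : row_free A ->
  (#|{: 'M['F_2]_(m,a)}| * #|[set B : 'M['F_2]_(m,n) | B *m A^T == Y]|)%N
   = #|{: 'M['F_2]_(m,n)}|.
Proof.
move=> fA; rewrite -(fiber_sum m A) (fiber_eq Y fA) -sum_nat_const.
by apply: eq_bigr => Z _; rewrite (fiber_eq Z fA).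
Qed.

Lemma goodS_card n a (U : {set 'cV['F_2]_n}) : (#|goodS U a| <= #|U| ^ a)%N.
Proof.
pose g := fun A : 'M['F_2]_(a,n) => [ffun i => (row i A)^T].
have ginj : injective g.
  move=> A A' e; apply/matrixP => i j.
  by have := congr1 (fun f : {ffun 'I_a -> 'cV['F_2]_n} => f i j 0) e; rewrite /g /= !ffunE !mxE.
rewrite -(card_in_imset (f := g) (D := goodS U a)); last by move=> ? ? _ _; apply: ginj.
rewrite -[a in (_ <= _ ^ a)%N]card_ord -card_ffun_on.
apply: subset_leq_card; apply/subsetP => _ /imsetP[A + ->].
rewrite inE => /andP[_ /forallP rA].
by apply/ffun_onP => i; rewrite /g ffunE.
Qed.

Lemma sumN m n a (U : {set 'cV['F_2]_n}) (Y : 'M['F_2]_(m,a)) :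
  (#|U| ^ a)%N = #|{: 'M['F_2]_(m,a)}| ->
  (\sum_(B : 'M['F_2]_(m,n)) #|[set A in goodS U a | B *m A^T == Y]|
    <= #|{: 'M['F_2]_(m,n)}|)%N.
Proof.
move=> hU.
have -> : (\sum_(B : 'M['F_2]_(m,n)) #|[set A in goodS U a | B *m A^T == Y]|
   = \sum_(A in goodS U a) #|[set B : 'M['F_2]_(m,n) | B *m A^T == Y]|)%N.
  transitivity (\sum_(B : 'M['F_2]_(m,n)) \sum_(A in goodS U a)
                  (if B *m A^T == Y then 1 else 0))%N.
    apply: eq_bigr => B _; rewrite -sum1_card.
    rewrite (eq_bigl (fun A => (A \in goodS U a) && (B *m A^T == Y))); last first.
      by move=> A; rewrite !inE.
    by rewrite big_mkcondr.
  rewrite exchange_big /=; apply: eq_bigr => A _.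
  by rewrite -big_mkcondr /= sum1_card; apply: eq_card => B; rewrite !inE.
have K0 : (0 < #|{: 'M['F_2]_(m,a)}|)%N by apply/card_gt0P; exists 0.
rewrite (eq_bigr (fun _ => #|{: 'M['F_2]_(m,n)}| %/ #|{: 'M['F_2]_(m,a)}|)%N); last first.
  move=> A; rewrite inE => /andP[fA _].
  by rewrite -(fiber_card Y fA) mulKn.
rewrite sum_nat_const.
apply: leq_trans (leq_divM _ #|{: 'M['F_2]_(m,a)}|).
by rewrite [X in (_ <= X)%N]mulnC leq_mul2r -hU goodS_card orbT.
Qed.

Local Close Scope ring_scope.

Theorem theorem2p2 (m n : nat) (U : {set 'cV['F_2]_n}) (y : 'cV['F_2]_m) (r : nat) :
  #|U| = 2 ^ m -> (0%R : 'cV['F_2]_n) \notin U ->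
  (prob_Zy_gt U y r <=
   (\prod_(j < ceil_log2 (r + 2)) ((r + 2)%:R - 2%:R ^+ j : rat))^-1)%R.
Proof.
Local Open Scope ring_scope.
move=> hU U0.
set a := ceil_log2 (r + 2).
pose Y : 'M['F_2]_(m,a) := (\matrix_(i, j) y i 0)%R.
have hUa : (#|U| ^ a)%N = #|{: 'M['F_2]_(m,a)}| by rewrite card_mx card_F2 hU -expnM.
have pow : forall j, (j < a)%N -> (2 ^ j < r + 2)%N.
  move=> j ja; apply: leq_ltn_trans (up_log_gtn (isT : (1 < 2)%N) (_ : (1 < r + 2)%N)).
    by apply: leq_pexp2l => //; rewrite -ltnS prednK // (leq_ltn_trans _ ja).
  by rewrite addn2.
pose P := (\prod_(j < a) (r + 2 - 2 ^ j))%N.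
have Prat : \prod_(j < a) ((r + 2)%:R - 2%:R ^+ j : rat) = P%:R.
  rewrite natr_prod; apply: eq_bigr => j _.
  by rewrite natrB ?natrX // ltnW // pow.
have P0 : (0 < P)%N by apply: prodn_gt0 => j; rewrite subn_gt0 pow.
set bad := [set B : 'M['F_2]_(m,n) | (r < Zy U y B)%N].
have key : (#|bad| * P <= #|{: 'M['F_2]_(m,n)}|)%N.
  apply: leq_trans (@sumN m n a U Y hUa).
  rewrite -sum_nat_const.
  apply: (@leq_trans (\sum_(B in bad) #|[set A in goodS U a | B *m A^T == Y]|)%N).
    apply: leq_sum => B; rewrite inE /Zy => hB.
    set S := [set u in U | B *m u == y].
    have S0 : 0 \notin S by rewrite inE negb_and U0.
    apply: leq_trans (_ : \prod_(i < a) (#|S| + 1 - 2 ^ i) <= _)%N.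
      by apply: leq_prod => j _; apply: leq_sub2r; rewrite addn1 addnS addn1.
    apply: leq_trans (goodS_lb a S0) _.
    apply: subset_leq_card; apply/subsetP => A.
    rewrite !inE => /andP[fA /forallP rA].
    apply/andP; split.
      apply/andP; split => //; apply/forallP => i.
      by have := rA i; rewrite inE => /andP[].
    apply/eqP/matrixP => i k.
    have := rA k; rewrite inE => /andP[_ /eqP h].
    rewrite /Y [RHS]mxE -h !mxE; apply: eq_bigr => l _; rewrite !mxE.
    done.
  rewrite [X in (_ <= X)%N](bigID (mem bad)) /=.
  exact: leq_addr.
rewrite Prat /prob_Zy_gt -/bad.
have M0 : (0 < #|{: 'M['F_2]_(m,n)}|)%N by apply/card_gt0P; exists 0.
rewrite ler_pdivrMr ?ltr0n // mulrC ler_pdivlMr ?ltr0n //.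
by rewrite -natrM ler_nat.
Qed.
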